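(* Let $G$ be a $\mathbb{Z}$-weighted complete graph with $n\ge2$ vertices such that $$s\Big(\{G\}*\Big\{I\big(K_2\sqcup\textstyle\bigsqcup_{i=1}^{n-2}K_1\big)\Big\}\Big)=\{1,2,\dots,k\}$$ for some $k\ge1$ (equivalently, the set of edge weights of $G$ is exactly $\{1,\dots,k\}$). Let $l$ be the unique element of $s(\{I(K_n)\}*\{G\})$ (i.e. $l=s(G)$). Then $$\bigcup_{H} s(\{I(H)\}*\{G\})=\{0,1,\dots,l\},$$ where $H$ ranges over all simple graphs on a fixed $n$-element vertex set (spanning subgraphs of $K_n$).
   Context: Here $R=\mathbb{Z}$. An $R$-weighted complete graph $K$ is a finite vertex set with a weight $v_K(e)\in R$ on every 2-subset $e$. For such $H,G'$ with equal vertex counts and a bijection $f:V(H)\to V(G')$, $H*_fG'$ has vertex set $V(H)$ and weights $v_H(\{x,y\})v_{G'}(\{f(x),f(y)\})$; $H*G'=\{H*_fG': f \text{ bijection}\}$. $s(K)=\sum_e v_K(e)$, $s(\mathscr K)=\{s(K):K\in\mathscr K\}$. For a simple graph $H$, $I(H)$ has weight $1$ on edges and $0$ on non-edges. $K_2\sqcup\bigsqcup_{i=1}^{n-2}K_1$ is the graph on $n$ vertices with exactly one edge. *)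

(* Defs.v *)
From HB Require Import structures.
From mathcomp Require Import all_boot all_order fingroup perm all_algebra.
Set Implicit Arguments. Unset Strict Implicit. Unset Printing Implicit Defensive.
Import GRing.Theory Num.Theory.
Local Open Scope ring_scope.

(* A Z-weighted complete graph on the vertex set 'I_n: a weight on every
   subset of vertices; only the values on 2-subsets are meaningful. *)
Definition wgraph (n : nat) := {set 'I_n} -> int.

Definition twosets (n : nat) : {set {set 'I_n}} := [set e : {set 'I_n} | #|e| == 2%N].

Definition wsum n (K : wgraph n) : int := \sum_(e in twosets n) K e.

Definition wprod n (H G : wgraph n) (f : {perm 'I_n}) : wgraph n :=
  fun e => H e * G (f @: e).

Definition sprod n (H G : wgraph n) : int -> Prop :=
  fun z => exists f : {perm 'I_n}, z = wsum (wprod H G f).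

Definition Igraph n (E : {set {set 'I_n}}) : wgraph n := fun e => (e \in E)%:Z.

(* K_2 ⊔ K_1 ⊔ ... ⊔ K_1 on 'I_n (n >= 2): the single edge {0,1}. *)
Definition one_edge (n : nat) : {set {set 'I_n}} :=
  [set e in twosets n | [forall i in e, (val i < 2)%N]].

(* Main.v *)
Require Import Defs.
From mathcomp Require Import all_boot all_order fingroup perm all_algebra.
From mathcomp Require Import zify ring.
Import Order.TTheory GRing.Theory Num.Theory.
Set Implicit Arguments. Unset Strict Implicit.
Local Open Scope ring_scope.

Lemma tw_imset n (f : {perm 'I_n}) (e : {set 'I_n}) : (f @: e \in twosets n) = (e \in twosets n).
Proof. by rewrite !inE card_imset //; apply: perm_inj. Qed.

Lemma reidx n (f : {perm 'I_n}) (F : {set 'I_n} -> int) :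
  \sum_(e in twosets n) F (f @: e) = \sum_(e in twosets n) F e.
Proof.
rewrite [RHS](reindex_inj (h := fun e : {set 'I_n} => f @: e)) /=; last first.
  by apply: imset_inj; apply: perm_inj.
by apply: eq_bigl => e; rewrite tw_imset.
Qed.

Lemma imsetKV n (f : {perm 'I_n}) (e : {set 'I_n}) : f @: (f^-1%g @: e) = e.
Proof.
rewrite -imset_comp (eq_imset _ (g := id)) ?imset_id // => x /=.
by rewrite permKV.
Qed.

Lemma imset1p n (e : {set 'I_n}) : (1%g : {perm 'I_n}) @: e = e.
Proof. by rewrite (eq_imset _ (g := id)) ?imset_id // => x /=; rewrite perm1. Qed.

Section S.
Variables (n : nat) (hn : (2 <= n)%N).
Definition i0 : 'I_n := Ordinal (ltnW hn).
Definition i1 : 'I_n := Ordinal hn.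
Definition e01 : {set 'I_n} := [set i0; i1].

Lemma i01 : i0 != i1. Proof. by []. Qed.

Lemma one_edgeE : one_edge n = [set e01].
Proof.
apply/setP => e; rewrite !inE; apply/idP/idP.
  case/andP => c2 /forallP H.
  rewrite eqEcard cards2 i01 (eqP c2) andbT; apply/subsetP => i ie.
  have := H i; rewrite ie /= => li; rewrite !inE.
  case: i li {ie} => [[|[|m]] hm] //= _.
move/eqP => ->; rewrite cards2 i01 /=; apply/forallP => i; apply/implyP.
by rewrite !inE => /orP[] /eqP ->.
Qed.

Lemma e01_tw : e01 \in twosets n.
Proof. by rewrite inE cards2 i01. Qed.

Lemma sum_one (G : wgraph n) (f : {perm 'I_n}) :
  wsum (wprod G (Igraph (one_edge n)) f) = G (f^-1%g @: e01).
Proof.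
rewrite /wsum /wprod -(reidx (f^-1)%g).
under eq_bigr => e _ do rewrite imsetKV /Igraph one_edgeE inE.
rewrite (bigD1 (e01)) ?e01_tw //= eqxx mulr1 big1 ?addr0 // => e /andP[_ /negbTE ->].
by rewrite mulr0.
Qed.

Lemma perm2 (a b : 'I_n) : a != b -> exists s : {perm 'I_n}, s @: e01 = [set a; b].
Proof.
move=> ab; set p := tperm i0 a; set c := p i1.
have ca : c != a.
  apply/eqP => h; have h' : p i1 = p i0 by rewrite -/c h /p tpermL.
  by move/perm_inj/eqP: h'; rewrite eq_sym (negbTE i01).
exists (p * tperm c b)%g.
rewrite imsetU1 imset_set1 !permM /= tpermL -/c tpermL tpermD // eq_sym //.
Qed.
End S.
Lemma cover (T : finType) (w : T -> int) : forall (A : {set T}),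
  (forall e, e \in A -> 0 <= w e) ->
  (forall e, e \in A -> w e <= 1 + \sum_(e' in A | w e' < w e) w e') ->
  forall z : int, 0 <= z <= \sum_(e in A) w e -> exists2 B : {set T}, B \subset A & z = \sum_(e in B) w e.
Proof.
move=> A; have [m] := ubnP #|A|; elim: m A => // m IH A hm h0 hC z /andP[z0 zS].
have [A0|[e0 e0A]] := set_0Vmem A.
  exists set0; first exact: sub0set. move: zS; rewrite A0 !big_set0 => zS; lia.
case: (@arg_maxP _ _ _ e0 (mem A) w e0A) => e eA emax.
have {}eA : e \in A := eA.
have {}emax : forall x, x \in A -> w x <= w e := emax.
have hA' : (#|A :\ e| < m)%N by rewrite (cardsD1 e A) eA in hm.
have h0' : forall x, x \in A :\ e -> 0 <= w x by move=> x /setD1P[_ /h0].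
have sm : forall x, x \in A :\ e ->
   \sum_(e' in A :\ e | w e' < w x) w e' = \sum_(e' in A | w e' < w x) w e'.
  move=> x /setD1P[_ xA]; apply: eq_bigl => y; rewrite !inE.
  case: eqP => [->|] //=; by rewrite ltNge emax ?andbF.
have hC' : forall x, x \in A :\ e -> w x <= 1 + \sum_(e' in A :\ e | w e' < w x) w e'.
  by move=> x xA; rewrite sm //; apply: hC; case/setD1P: xA.
have eS : \sum_(x in A) w x = w e + \sum_(x in A :\ e) w x.
  by rewrite (big_setD1 e).
have le1 : w e - 1 <= \sum_(x in A :\ e) w x.
  have := hC e eA; rewrite -lerBlDl => H; apply: (le_trans H).
  rewrite [leRHS](bigID (fun x => w x < w e)) /= -[leLHS]addr0; apply: lerD.
    rewrite le_eqVlt; apply/orP; left; apply/eqP; apply: eq_bigl => y.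
    rewrite !inE; case: eqP => [->|]; rewrite ?ltxx ?andbF //.
  by apply: sumr_ge0 => x /andP[/h0' ].
have [zle|zgt] := leP z (\sum_(x in A :\ e) w x).
  have [B BA ->] := IH (A :\ e) hA' h0' hC' z (andb_true_intro (conj z0 zle)).
  exists B => //; apply: (subset_trans BA); apply: subsetDl.
have Hz : 0 <= z - w e <= \sum_(x in A :\ e) w x.
  apply/andP; split; first lia.
  by rewrite lerBlDl -eS.
have [B BA zB] := IH (A :\ e) hA' h0' hC' (z - w e) Hz.
exists (e |: B).
  by rewrite subUset sub1set eA (subset_trans BA) // subsetDl.
rewrite big_setU1 /= -?zB; first by ring.
by apply/negP => /(subsetP BA); rewrite setD11.
Qed.

Unset Implicit Arguments.
Theorem mainTheorem12 (n : nat) (hn : (2 <= n)%N) (G : wgraph n) (k : nat)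
  (hk : (1 <= k)%N)
  (hG : forall z : int, sprod G (Igraph (one_edge n)) z <-> (1 <= z <= k%:Z))
  (l : int) (hl : sprod (Igraph (twosets n)) G l) :
  forall z : int,
    (exists E : {set {set 'I_n}}, E \subset twosets n /\ sprod (Igraph E) G z)
    <-> (0 <= z <= l).
Proof.
have hG' : forall z : int, (exists f : {perm 'I_n}, z = G (f^-1%g @: e01 hn)) <-> (1 <= z <= k%:Z).
  move=> z; rewrite -hG; split => -[f ->]; exists f; by rewrite sum_one.
have bnd : forall e, e \in twosets n -> 1 <= G e <= k%:Z.
  move=> e; rewrite inE => /cards2P [a [b [ab ->]]].
  have [s hs] := perm2 hn ab.
  apply/hG'; exists s^-1%g; by rewrite invgK hs.
have wit : forall v : int, 1 <= v <= k%:Z -> exists2 e, e \in twosets n & G e = v.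
  move=> v /hG' [f ->]; exists (f^-1%g @: e01 hn) => //.
  by rewrite tw_imset e01_tw.
have h0 : forall e, e \in twosets n -> 0 <= G e.
  by move=> e /bnd /andP[h _]; apply: le_trans h.
have D : forall x : nat, (x <= k)%N ->
    x%:Z <= \sum_(e' in twosets n | G e' < (x.+1)%:Z) G e'.
  elim => [|x IH] xk; first by apply: sumr_ge0 => e /andP[/h0].
  rewrite (bigID (fun e => G e < (x.+1)%:Z)) /=.
  have [ev evt evv] := wit (x.+1)%:Z ltac:(lia).
  have -> : \sum_(i | (i \in twosets n) && (G i < x.+2%:Z) && (G i < x.+1%:Z)) G i =
            \sum_(i in twosets n | G i < x.+1%:Z) G i.
    apply: eq_bigl => i; case: (i \in twosets n) => //=.
    case H: (G i < x.+1%:Z); rewrite ?andbT ?andbF //; lia.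
  rewrite [X in _ + X](bigD1 ev) /=; last by rewrite evt evv; lia.
  have := IH (ltnW xk).
  have : 0 <= \sum_(i | (i \in twosets n) && (G i < x.+2%:Z) && ~~ (G i < x.+1%:Z) && (i != ev)) G i.
    by apply: sumr_ge0 => e /andP[/andP[/andP[/h0]]].
  rewrite evv => h1 h2; rewrite -[leLHS]add0r; apply: lerD.
    by apply: le_trans h2.
  by rewrite -[leLHS]addr0 lerD.
have hC : forall e, e \in twosets n -> G e <= 1 + \sum_(e' in twosets n | G e' < G e) G e'.
  move=> e et; have /andP[g1 gk] := bnd e et.
  have := D `|G e - 1|%N ltac:(lia).
  have -> : (`|G e - 1|%N.+1)%:Z = G e by lia.
  lia.
have lE : l = \sum_(e in twosets n) G e.
  case: hl => f ->; rewrite /wsum /wprod -[RHS](reidx f).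
  by apply: eq_bigr => e et; rewrite /Igraph et mul1r.
move=> z; split.
  case=> E [Esub [f ->]]; rewrite /wsum /wprod /Igraph; apply/andP; split.
    apply: sumr_ge0 => e et; apply: mulr_ge0 => //; by rewrite h0 ?tw_imset.
  rewrite lE -[leRHS](reidx f); apply: ler_sum => e et.
  have := h0 _ (etrans (tw_imset f e) et).
  by case: (e \in E) => /= ?; rewrite ?mul1r ?mul0r.
rewrite lE => /(cover h0 hC) [B Bsub ->].
exists B; split => //; exists 1%g.
rewrite /wsum /wprod /Igraph.
rewrite [RHS](eq_bigr (fun e => (e \in B)%:Z * G e)); last by move=> e _; rewrite imset1p.
rewrite [RHS](bigID (fun e => e \in B)) /= [X in _ = _ + X]big1 ?addr0; last first.
  by move=> e /andP[_ /negbTE ->]; rewrite mul0r.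
apply: eq_big => [e|e ->]; last by rewrite mul1r.
by case eB: (e \in B); rewrite ?andbF ?andbT // (subsetP Bsub).
Qed.
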